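(* Let $M$ be a matroid on a finite set $E$ with $r(M)>0$. If $M$ is a unique expansion matroid, then $M$ is a union minimal matroid.
   Context: For a matroid $M=(E,\mathcal{I})$: $\mathcal{I}(M)$ its independent sets, $\mathcal{B}(M)$ its bases, $r(M)$ the size of a base, $\cup\mathcal{B}(M)$ the union of all bases. For $r(M)>0$, $s(M)=\{A\in\mathcal{I}(M): |A|=r(M)-1\}$. $M$ is a unique expansion matroid if for every $B\in\mathcal{B}(M)$ and every $A\in s(M)$, whenever $e_1,e_2\in B$ satisfy $A\cup\{e_1\}\in\mathcal{B}(M)$ and $A\cup\{e_2\}\in\mathcal{B}(M)$, then $e_1=e_2$. $M$ is union minimal if for every matroid $M_1$ on $E$ with $\cup\mathcal{B}(M_1)=\cup\mathcal{B}(M)$ and $\mathcal{B}(M_1)\subseteq\mathcal{B}(M)$ we have $\mathcal{B}(M_1)=\mathcal{B}(M)$. *)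

(* Defs.v *)
From mathcomp Require Import all_boot.
Set Implicit Arguments. Unset Strict Implicit. Unset Printing Implicit Defensive.

Section Matroids.
Variable E : finType.

Definition is_matroid (I : {set {set E}}) : Prop :=
  [/\ set0 \in I,
      (forall A B : {set E}, B \in I -> A \subset B -> A \in I) &
      (forall A B : {set E}, A \in I -> B \in I -> #|A| < #|B| ->
         exists2 x, x \in B :\: A & x |: A \in I)].

Definition bases (I : {set {set E}}) : {set {set E}} :=
  [set B in I | [forall C in I, (B \subset C) ==> (C == B)]].

Definition mrank (I : {set {set E}}) : nat :=
  #|odflt set0 [pick B in bases I]|.

Definition sM (I : {set {set E}}) : {set {set E}} :=
  [set A in I | #|A| == (mrank I).-1].

Definition union_bases (I : {set {set E}}) : {set E} :=
  \bigcup_(B in bases I) B.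

Definition unique_expansion (I : {set {set E}}) : Prop :=
  forall B A : {set E}, B \in bases I -> A \in sM I ->
  forall e1 e2 : E, e1 \in B -> e2 \in B ->
    e1 |: A \in bases I -> e2 |: A \in bases I -> e1 = e2.

Definition union_minimal (I : {set {set E}}) : Prop :=
  forall I1 : {set {set E}}, is_matroid I1 ->
    union_bases I1 = union_bases I -> bases I1 \subset bases I ->
    bases I1 = bases I.

End Matroids.

(* Main.v *)
Require Import Defs.
From mathcomp Require Import all_boot.
Set Implicit Arguments. Unset Strict Implicit. Unset Printing Implicit Defensive.

Section Aux.
Variable E : finType.
Implicit Types (J : {set {set E}}) (A B C : {set E}).

Lemma basesE J B : B \in bases J ->
  B \in J /\ (forall C, C \in J -> B \subset C -> C = B).
Proof.
rewrite inE => /andP [HB /forallP H]; split => // C HC HBC.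
by move: (H C); rewrite HC HBC /= => /eqP.
Qed.

Lemma basesI J B : B \in J -> (forall C, C \in J -> B \subset C -> C = B) ->
  B \in bases J.
Proof.
move=> HB H; rewrite inE HB /=; apply/forallP => C; apply/implyP => HC.
by apply/implyP => HBC; rewrite (H C HC HBC).
Qed.

Lemma base_max J B C : is_matroid J -> B \in bases J -> C \in J -> #|C| <= #|B|.
Proof.
case=> _ _ H3 /basesE [HB Hmax] HC; rewrite leqNgt; apply/negP => lt.
have [x Hx Hin] := H3 _ _ HB HC lt.
have := Hmax _ Hin (subsetUr _ _) => eq.
move: Hx; rewrite inE => /andP [/negP Hn _]; apply: Hn.
by rewrite -eq setU11.
Qed.

Lemma size_base J B A : is_matroid J -> B \in bases J -> A \in J ->
  #|A| = #|B| -> A \in bases J.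
Proof.
move=> HJ HB HA Hc; apply: basesI => // C HC HAC.
have := base_max HJ HB HC; rewrite -Hc => Hle.
by apply/esym/eqP; rewrite eqEcard HAC Hle.
Qed.

End Aux.

Theorem theorem10 (E : finType) (I : {set {set E}}) :
  is_matroid I -> 0 < mrank I -> unique_expansion I -> union_minimal I.
Proof.
move=> HI Hr Hue I1 HI1 Hun Hsub.
apply/eqP; rewrite eqEsubset Hsub /=; apply/subsetP => B HB.
have [B0 HB0 Hr0] : exists2 B0, B0 \in bases I & #|B0| = mrank I.
  move: Hr; rewrite /mrank; case: pickP => [B' HB' _|_] /=; last by rewrite cards0.
  by exists B'.
set r := mrank I in Hr0 Hr.
have Hsz : forall C, C \in bases I -> #|C| = r.
  move=> C HC; apply/eqP; rewrite eqn_leq -{1}Hr0 (base_max HI HB0) ?(basesE HC).1 //.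
  by rewrite -Hr0 (base_max HI HC) ?(basesE HB0).1.
have Hsz1 : forall C, C \in bases I1 -> #|C| = r.
  by move=> C HC; apply: Hsz; apply: (subsetP Hsub).
have [z Hz] : exists z, z \in B0.
  by apply/set0Pn; rewrite -card_gt0 Hr0.
have : z \in union_bases I1 by rewrite Hun; apply/bigcupP; exists B0.
case/bigcupP => B1 HB1 _.
have HB1I : B1 \in bases I by apply: (subsetP Hsub).
suff: forall n B, B \in bases I -> #|B :\: B1| = n -> B \in bases I1.
  by move=> /(_ _ B HB (erefl _)).
elim=> [|n IH] {}B {}HB Hn.
  move/eqP: Hn; rewrite cards_eq0 setD_eq0 => HBB1.
  by rewrite -((basesE HB).2 _ (basesE HB1I).1 HBB1).
have [x Hx] : exists x, x \in B :\: B1 by apply/set0Pn; rewrite -card_gt0 Hn.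
have HxB : x \in B by move: Hx; rewrite inE => /andP [].
have HxB1 : x \notin B1 by move: Hx; rewrite inE => /andP [].
set A := B :\ x.
have HAI : A \in I by case: HI => _ H2 _; apply: (H2 _ B (basesE HB).1); apply: subsetDl.
have HcB : #|B| = (#|A|).+1 by rewrite (cardsD1 x B) HxB.
have HcA : #|A| = r.-1 by rewrite -(Hsz _ HB) HcB.
have Hlt : #|A| < #|B1| by rewrite (Hsz1 _ HB1) -(Hsz _ HB) HcB.
have [HI_1 HI_2 HI_3] := HI.
have [y Hy HyA] := HI_3 _ _ HAI (basesE HB1I).1 Hlt.
have HyB1 : y \in B1 by move: Hy; rewrite inE => /andP [].
have HyA' : y \notin A by move: Hy; rewrite inE => /andP [].
have Hyx : y != x by apply/eqP => e; move: HxB1; rewrite -e HyB1.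
have HyB : y \notin B by move: HyA'; rewrite !inE Hyx.
have HB' : y |: A \in bases I.
  apply: (size_base HI HB) => //; by rewrite cardsU1 HyA' HcB.
have HB'n : #|(y |: A) :\: B1| = n.
  have -> : (y |: A) :\: B1 = (B :\: B1) :\ x.
    apply/setP => w; rewrite !inE.
    case: (eqVneq w y) => [->|_] /=.
      by rewrite HyB1 /= andbF.
    by case: (w \in B1); case: (w == x); case: (w \in B).
  by move: Hn; rewrite (cardsD1 x (B :\: B1)) Hx => -[].
have HB'1 := IH _ HB' HB'n.
have : x \in union_bases I1 by rewrite Hun; apply/bigcupP; exists B.
case/bigcupP => B2 HB2 HxB2.
have [HJ_1 HJ_2 HJ_3] := HI1.
have HAI1 : A \in I1 by apply: (HJ_2 _ _ (basesE HB'1).1); apply: subsetUr.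
have Hlt2 : #|A| < #|B2| by rewrite (Hsz1 _ HB2) -(Hsz _ HB) HcB.
have [e He HeA] := HJ_3 _ _ HAI1 (basesE HB2).1 Hlt2.
have HeB2 : e \in B2 by move: He; rewrite inE => /andP [].
have HeA' : e \notin A by move: He; rewrite inE => /andP [].
have HeA1 : e |: A \in bases I1.
  apply: (size_base HI1 HB2) => //; by rewrite cardsU1 HeA' (Hsz1 _ HB2) -(Hsz _ HB) HcB.
have HxA : x |: A = B by rewrite /A setD1K.
have HsM : A \in sM I by rewrite inE HAI HcA eqxx.
have Hex := Hue _ _ (subsetP Hsub _ HB2) HsM _ _ HeB2 HxB2 (subsetP Hsub _ HeA1) (etrans (congr1 (fun S => S \in bases I) HxA) HB).
by rewrite -HxA -Hex.
Qed.
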